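(* Let $N$ be a nonempty finite set, for each $i\in N$ let $S_i$ be a nonempty lattice, and let $S\subset\prod_{i\in N}S_i$ be a nonempty sublattice (product order) such that every projection $S\to S_i$ is surjective. Suppose $S$ is a subcomplete sublattice of $\prod_{i\in N}S_i$. Then: (1) for every $i\in N$, $S_i$ is a complete lattice; (2) for every $i\in N$ and every $x_{-i}\in S_{-i}:=\prod_{j\ne i}S_j$, the set $S_i(x_{-i}):=\{x_i\in S_i:(x_i,x_{-i})\in S\}$ is a subcomplete sublattice of $S_i$; (3) for every $x\in S$, the set $S(x):=\left(\prod_{i\in N}S_i(x_{-i})\right)\cap S$ is a subcomplete sublattice of $S$.
   Context: A subset $T$ of a poset $P$ is a subcomplete sublattice of $P$ if for every nonempty $A\subset T$, $\sup_P A$ and $\inf_P A$ exist and belong to $T$; $P$ is a complete lattice if it is a subcomplete sublattice of itself. *)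

(* Defs.v *)
From mathcomp Require Import all_boot all_order.
Set Implicit Arguments. Unset Strict Implicit. Unset Printing Implicit Defensive.
Import Order.TTheory.

(* Generic order-theoretic notions for a poset given by a relation [le]
   restricted to a carrier predicate [P] (the ambient poset). *)

Definition is_sup_in {X : Type} (le : X -> X -> Prop) (P A : X -> Prop) (s : X) : Prop :=
  P s /\ (forall a, A a -> le a s) /\
  (forall u, P u -> (forall a, A a -> le a u) -> le s u).

Definition is_inf_in {X : Type} (le : X -> X -> Prop) (P A : X -> Prop) (s : X) : Prop :=
  P s /\ (forall a, A a -> le s a) /\
  (forall u, P u -> (forall a, A a -> le u a) -> le u s).

Definition subcomplete {X : Type} (le : X -> X -> Prop) (P T : X -> Prop) : Prop :=
  forall A : X -> Prop, (forall a, A a -> T a) -> (exists a, A a) ->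
    (exists s, is_sup_in le P A s /\ T s) /\ (exists s, is_inf_in le P A s /\ T s).

Definition complete_lat {X : Type} (le : X -> X -> Prop) : Prop :=
  subcomplete le (fun _ => True) (fun _ => True).

Definition prod_le {N : Type} {d : N -> Order.disp_t} {L : forall i, latticeType (d i)}
  (x y : forall i, L i) : Prop := forall i, (x i <= y i)%O.

(* S_i(x_{-i}) = { a in S_i : (a, x_{-i}) in S }; only the components j != i
   of x are used. *)
Definition section {N : finType} {d : N -> Order.disp_t} {L : forall i, latticeType (d i)}
  (S : (forall k, L k) -> Prop) (i : N) (x : forall k, L k) (a : L i) : Prop :=
  exists y, S y /\ y i = a /\ (forall j, j != i -> y j = x j).

Arguments section {N d L} S i x a.

Definition box_sec {N : finType} {d : N -> Order.disp_t} {L : forall i, latticeType (d i)}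
  (S : (forall i, L i) -> Prop) (x : forall i, L i) (y : forall i, L i) : Prop :=
  S y /\ forall k, section S k x (y k).

(* Main.v *)
Require Import Defs.
From mathcomp Require Import all_boot all_order.
Import Order.TTheory.
Set Implicit Arguments. Unset Strict Implicit.
Local Open Scope order_scope.

Section Aux.
Variables (N : finType) (d : N -> Order.disp_t) (L : forall i, latticeType (d i)).

Lemma proj_sup (B : (forall i, L i) -> Prop) s i :
  is_sup_in prod_le (fun _ => True) B s ->
  is_sup_in (fun a b : L i => a <= b) (fun _ => True) (fun a => exists y, B y /\ y i = a) (s i).
Proof.
move=> [_ [ub lub]]; split=> //; split.
  by move=> a [y [By <-]]; apply: ub.
move=> u _ hu.
have : prod_le s (dfwith s u).
  apply: lub => // y By j; case: dfwithP => [|j' ij].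
    by apply: hu; exists y.
  exact: ub.
by move/(_ i); rewrite dfwith_in.
Qed.

Lemma proj_inf (B : (forall i, L i) -> Prop) s i :
  is_inf_in prod_le (fun _ => True) B s ->
  is_inf_in (fun a b : L i => a <= b) (fun _ => True) (fun a => exists y, B y /\ y i = a) (s i).
Proof.
move=> [_ [ub lub]]; split=> //; split.
  by move=> a [y [By <-]]; apply: ub.
move=> u _ hu.
have : prod_le (dfwith s u) s.
  apply: lub => // y By j; case: dfwithP => [|j' ij].
    by apply: hu; exists y.
  exact: ub.
by move/(_ i); rewrite dfwith_in.
Qed.
End Aux.

Lemma sup_uniq d (T : latticeType d) (A : T -> Prop) s t :
  is_sup_in (fun a b : T => a <= b) (fun _ => True) A s ->
  is_sup_in (fun a b : T => a <= b) (fun _ => True) A t -> s = t.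
Proof.
move=> [_ [us ls]] [_ [ut lt]]; apply/le_anti/andP; split.
  exact: ls. exact: lt.
Qed.

Lemma inf_uniq d (T : latticeType d) (A : T -> Prop) s t :
  is_inf_in (fun a b : T => a <= b) (fun _ => True) A s ->
  is_inf_in (fun a b : T => a <= b) (fun _ => True) A t -> s = t.
Proof.
move=> [_ [us ls]] [_ [ut lt]]; apply/le_anti/andP; split.
  exact: lt. exact: ls.
Qed.

Lemma sup_ext X (le : X -> X -> Prop) P (A A' : X -> Prop) s :
  (forall a, A a <-> A' a) -> is_sup_in le P A s -> is_sup_in le P A' s.
Proof.
move=> e [Ps [ub lub]]; split=> //; split.
  by move=> a /e; apply: ub.
by move=> u Pu hu; apply: lub => // a /e; apply: hu.
Qed.

Lemma inf_ext X (le : X -> X -> Prop) P (A A' : X -> Prop) s :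
  (forall a, A a <-> A' a) -> is_inf_in le P A s -> is_inf_in le P A' s.
Proof.
move=> e [Ps [ub lub]]; split=> //; split.
  by move=> a /e; apply: ub.
by move=> u Pu hu; apply: lub => // a /e; apply: hu.
Qed.

Theorem lemma5p2 (N : finType) (d : N -> Order.disp_t)
  (L : forall i, latticeType (d i))
  (S : (forall i, L i) -> Prop) :
  (0 < #|N|)%N ->
  (forall i, inhabited (L i)) ->
  (exists x, S x) ->
  (forall x y, S x -> S y ->
     S (fun i => Order.meet (x i) (y i)) /\ S (fun i => Order.join (x i) (y i))) ->
  (forall i (a : L i), exists x, S x /\ x i = a) ->
  subcomplete prod_le (fun _ => True) S ->
  (forall i, complete_lat (fun a b : L i => (a <= b)%O)) /\
  (forall i (x : forall j, L j),
     subcomplete (fun a b : L i => (a <= b)%O) (fun _ => True) (section S i x)) /\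
  (forall x, S x -> subcomplete prod_le S (box_sec S x)).
Proof.
move=> _ _ _ _ surj sc.
have P1 : forall i, complete_lat (fun a b : L i => (a <= b)%O).
  move=> i A _ [a0 Aa0].
  pose B := fun y : forall j, L j => S y /\ A (y i).
  have BS : forall y, B y -> S y by move=> y [].
  have [y0 [Sy0 y0i]] := surj i a0.
  have Bne : exists y, B y by exists y0; split=> //; rewrite y0i.
  have eA : forall a, (exists y, B y /\ y i = a) <-> A a.
    move=> a; split; first by move=> [y [[_ Ay] <-]].
    by move=> Aa; have [y [Sy yi]] := surj i a; exists y; split=> //; split=> //; rewrite yi.
  have [[s [hs _]] [t [ht _]]] := sc B BS Bne.
  split; [exists (s i) | exists (t i)]; split=> //.
    exact: sup_ext eA (proj_sup i hs).
  exact: inf_ext eA (proj_inf i ht).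
have P2 : forall i (x : forall j, L j),
     subcomplete (fun a b : L i => (a <= b)%O) (fun _ => True) (section S i x).
  move=> i x A Asec [a0 Aa0].
  pose B := fun y : forall j, L j => S y /\ A (y i) /\ forall j, j != i -> y j = x j.
  have BS : forall y, B y -> S y by move=> y [].
  have [y0 [Sy0 [y0i y0o]]] := Asec a0 Aa0.
  have Bne : exists y, B y by exists y0; split=> //; rewrite y0i.
  have eA : forall a, (exists y, B y /\ y i = a) <-> A a.
    move=> a; split; first by move=> [y [[_ [Ay _]] <-]].
    move=> Aa; have [y [Sy [yi yo]]] := Asec a Aa.
    by exists y; split=> //; split=> //; rewrite yi.
  have eO : forall j, j != i -> forall a, (exists y, B y /\ y j = a) <-> a = x j.
    move=> j ji a; split; first by move=> [y [[_ [_ yo]] <-]]; apply: yo.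
    move=> ->; exists y0; split; last exact: y0o.
    by split=> //; split=> //; rewrite y0i.
  have [[s [hs Ss]] [t [ht St]]] := sc B BS Bne.
  split; [exists (s i) | exists (t i)]; split.
  - exact: sup_ext eA (proj_sup i hs).
  - exists s; split=> //; split=> // j ji.
    have [_ [ub lub]] := sup_ext (eO j ji) (proj_sup j hs).
    apply/le_anti/andP; split.
      by apply: lub => // a ->.
    exact: ub.
  - exact: inf_ext eA (proj_inf i ht).
  - exists t; split=> //; split=> // j ji.
    have [_ [ub lub]] := inf_ext (eO j ji) (proj_inf j ht).
    apply/le_anti/andP; split.
      exact: ub.
    by apply: lub => // a ->.
split=> //; split=> //.
move=> x Sx A Abox [a0 Aa0].
have AS : forall a, A a -> S a by move=> a /Abox [].
have [[s [hs Ss]] [t [ht St]]] := sc A AS (ex_intro _ a0 Aa0).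
have Ak : forall k, (forall b, (exists a, A a /\ a k = b) -> section S k x b).
  by move=> k b [a [/Abox [_ h] <-]].
have Akne : forall k, exists b, exists a, A a /\ a k = b.
  by move=> k; exists (a0 k); exists a0.
split.
- exists s; split; last first.
    split=> // k.
    have [[s' [hs' sec]] _] := P2 k x _ (Ak k) (Akne k).
    by rewrite (sup_uniq (proj_sup k hs) hs').
  case: hs => _ [ub lub]; split=> //; split=> //.
  by move=> u _; apply: lub.
- exists t; split; last first.
    split=> // k.
    have [_ [t' [ht' sec]]] := P2 k x _ (Ak k) (Akne k).
    by rewrite (inf_uniq (proj_inf k ht) ht').
  case: ht => _ [ub lub]; split=> //; split=> //.
  by move=> u _; apply: lub.
Qed.
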